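(* Let $K$ be a field, $R=K[x,y,z]$, and let $a,b,c$ be pairwise relatively prime positive integers. Set $S=K[x^a,y^b,z^c]$ and $L=abc$. Then the ideal $\mathfrak{a}=S_{\ge L}$ of $S$ is normal, that is, $\mathfrak{a}^t=S_{\ge tL}$ for all $t\ge1$.
   Context: $S$ is graded as a subring of $R$ with the standard grading $\deg x=\deg y=\deg z=1$, so $\deg(x^{ua}y^{vb}z^{wc})=ua+vb+wc$. For an $\mathbb{N}$-graded ring $A$ and positive integer $t$, $A_{\ge t}=\bigoplus_{s\ge t}A_s$; thus $S_{\ge m}$ is the ideal of $S$ spanned by the monomials $x^{ua}y^{vb}z^{wc}$ ($u,v,w\in\mathbb{N}$) with $ua+vb+wc\ge m$. *)

(* Defs.v *)
(* K[x,y,z] is modelled as {poly {poly {poly K}}}: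
   z is the outermost variable, y the middle, x the innermost. *)
From HB Require Import structures.
From mathcomp Require Import all_boot all_order all_algebra.
Set Implicit Arguments. Unset Strict Implicit. Unset Printing Implicit Defensive.
Import Order.TTheory GRing.Theory Num.Theory.
Local Open Scope ring_scope.

Definition poly3 (K : fieldType) := {poly {poly {poly K}}}.

Definition coef3 (K : fieldType) (f : poly3 K) (i j k : nat) : K :=
  ((f`_k)`_j)`_i.

Definition inS (K : fieldType) (a b c : nat) (f : poly3 K) : Prop :=
  forall i j k, coef3 f i j k != 0 -> [&& (a %| i)%N, (b %| j)%N & (c %| k)%N].

Definition inSge (K : fieldType) (a b c m : nat) (f : poly3 K) : Prop :=
  inS a b c f /\ forall i j k, coef3 f i j k != 0 -> (m <= i + j + k)%N.

(* t-th power of an ideal I (given as a predicate) of a commutative ring: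
   finite sums of products of t elements of I.  (For an ideal I of S, the
   ideal of S generated by t-fold products of elements of I is exactly
   this set, since S-multiples can be absorbed in one factor.) *)
Definition idealpow (A : comNzRingType) (I : A -> Prop) (t : nat) (f : A) : Prop :=
  exists ps : seq (seq A),
    (forall p, p \in ps -> size p = t /\ forall g, g \in p -> I g) /\
    f = \sum_(p <- ps) \prod_(g <- p) g.

(* Main.v *)
Require Import Defs.
From Stdlib Require Import Lia Arith.
Lemma key0 (x y z : nat) : (S x*S y+S y*S z+S z*S x < S x*S y*S z + 2*(S x+S y+S z)).
assert (e : S x*S y*S z + 2*(S x+S y+S z) = S x*S y+S y*S z+S z*S x + (x*y*z + x+y+z+4)) by ring.
lia. Qed.

From HB Require Import structures.
From mathcomp Require Import all_boot all_order all_algebra.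
Import Order.TTheory GRing.Theory Num.Theory.

Lemma key (a b c : nat) : 0<a -> 0<b -> 0<c -> a*b+b*c+c*a < a*b*c + 2*(a+b+c).
Proof.
case: a => [|x] // _; case: b => [|y] // _; case: c => [|z] // _. apply/ssrnat.ltP. exact: key0. Qed.

Lemma pairb (a b c u v : nat) : 0 < a -> 0 < b -> u %/ b + v %/ a < c ->
  a*u + b*v + a + b <= a*b*c + a*b.
Proof.
move=> ha hb h.
have eu := divn_eq u b; have ev := divn_eq v a.
have ru := ltn_pmod u hb; have rv := ltn_pmod v ha.
set p := u %/ b in eu h *; set r := u %% b in eu ru *.
set q := v %/ a in ev h *; set s := v %% a in ev rv *.
have h1 : a * r.+1 <= a * b by rewrite leq_mul2l ru orbT.
have h2 : b * s.+1 <= b * a by rewrite leq_mul2l rv orbT.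
have h3 : a * b * (p + q).+1 <= a * b * c by rewrite leq_mul2l h orbT.
rewrite eu ev. rewrite !mulnS !mulnDr in h1 h2 h3. move/ssrnat.leP: h1; move/ssrnat.leP: h2; move/ssrnat.leP: h3 => h3 h2 h1. apply/ssrnat.leP. clearbody p q r s. rewrite -!multE -!plusE in h1 h2 h3 *. nia.
Qed.

Lemma pairc (a b c u v : nat) : c <= u %/ b + v %/ a ->
  exists u1 v1, u1 <= u /\ v1 <= v /\ a*u1 + b*v1 = a*b*c.
Proof.
move=> h. exists (b * minn c (u %/ b)), (a * (c - minn c (u %/ b))).
split; [|split].
- apply: leq_trans (leq_trunc_div u b). rewrite mulnC leq_mul2r geq_minr orbT //.
- apply: leq_trans (leq_trunc_div v a). rewrite mulnC leq_mul2r. apply/orP; right.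
  rewrite leq_subLR /minn. case: ltnP => hc //. by rewrite leq_addr.
- by rewrite mulnA (mulnCA b a) mulnA -mulnDr subnKC ?geq_minl.
Qed.

Lemma step (a b c u v w : nat) : 0<a -> 0<b -> 0<c -> 2*(a*b*c) <= a*u+b*v+c*w ->
  exists u1 v1 w1, [/\ u1<=u, v1<=v, w1<=w & a*u1+b*v1+c*w1 = a*b*c].
Proof.
move=> ha hb hc hD.
case: (leqP c (u %/ b + v %/ a)) => h1.
  have [u1 [v1 [? [? e]]]] := pairc a b c u v h1. by exists u1, v1, 0; rewrite muln0 addn0.
case: (leqP b (u %/ c + w %/ a)) => h2.
  have [u1 [w1 [? [? e]]]] := pairc a c b u w h2. exists u1, 0, w1; split => //.
  by rewrite muln0 addn0 e mulnAC.
case: (leqP a (v %/ c + w %/ b)) => h3.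
  have [v1 [w1 [? [? e]]]] := pairc b c a v w h3. exists 0, v1, w1; split => //.
  by rewrite muln0 add0n e mulnC mulnA.
have H1 := pairb a b c u v ha hb h1. have H2 := pairb a c b u w ha hc h2. have H3 := pairb b c a v w hb hc h3.
have K := key a b c ha hb hc.
move/ssrnat.leP: H1; move/ssrnat.leP: H2; move/ssrnat.leP: H3; move/ssrnat.ltP: K; move/ssrnat.leP: hD => hD K H3 H2 H1.
exfalso. rewrite -!multE -!plusE in H1 H2 H3 K hD. clear h1 h2 h3. lia.
Qed.

Lemma decomp (a b c : nat) : 0<a -> 0<b -> 0<c -> forall t, 0 < t -> forall u v w,
  t*(a*b*c) <= a*u+b*v+c*w ->
  exists s : seq (nat*nat*nat), [/\ size s = t,
     all (fun e => a*b*c <= a*e.1.1+b*e.1.2+c*e.2) s,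
     sumn (map (fun e => e.1.1) s) = u, sumn (map (fun e=>e.1.2) s) = v
   & sumn (map (fun e=>e.2) s) = w].
Proof.
move=> ha hb hc; elim=> [//|[|t] IH] _ u v w hD.
  exists [:: (u,v,w)]; split => //=; rewrite ?addn0 //. by rewrite mul1n in hD; rewrite hD.
have [u1 [v1 [w1 [hu hv hw e]]]] := step a b c u v w ha hb hc (leq_trans (leq_mul (isT : 2 <= t.+2) (leqnn (a*b*c))) hD).
have : t.+1 * (a*b*c) <= a*(u-u1)+b*(v-v1)+c*(w-w1).
  rewrite !mulnBr.
  have h1 : a*u1 <= a*u by rewrite leq_mul2l hu orbT.
  have h2 : b*v1 <= b*v by rewrite leq_mul2l hv orbT.
  have h3 : c*w1 <= c*w by rewrite leq_mul2l hw orbT.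
  rewrite mulSn in hD. move: hD h1 h2 h3 e.
  move=> /ssrnat.leP hD /ssrnat.leP h1 /ssrnat.leP h2 /ssrnat.leP h3 e. apply/ssrnat.leP.
  rewrite -!multE -!plusE -!minusE in hD h1 h2 h3 e *. lia.
move=> /(IH isT) [s [hs ha' hu' hv' hw']].
exists ((u1,v1,w1) :: s); split => /=.
- by rewrite hs.
- by rewrite e leqnn ha'.
- by rewrite hu' subnKC.
- by rewrite hv' subnKC.
- by rewrite hw' subnKC.
Qed.

Local Open Scope ring_scope.

Section P.
Context {K : fieldType}.

Definition term (x : K) (i j k : nat) : poly3 K :=
  (((x *: 'X^i : {poly K}) *: ('X^j : {poly {poly K}})) *: ('X^k : poly3 K)).

Lemma coef3_term x i j k i' j' k' :
  coef3 (term x i j k) i' j' k' = if [&& i' == i, j' == j & k' == k] then x else 0.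
Proof.
rewrite /coef3 /term coefZ coefXn.
case: (k' =P k) => [e|/eqP nk]; [subst|]; last by rewrite mulr0 !coef0 !andbF.
rewrite mulr1 coefZ coefXn.
case: (j' =P j) => [e|/eqP nj]; [subst|]; last by rewrite mulr0 !coef0 !andbF.
rewrite mulr1 coefZ coefXn.
case: (i' =P i) => [e|/eqP ni]; [subst|]; last by rewrite mulr0.
by rewrite mulr1.
Qed.

Lemma scaleX_mul (R : comNzRingType) (p q : R) n m :
  (p *: 'X^n : {poly R}) * (q *: 'X^m) = (p * q) *: 'X^(n + m).
Proof. by rewrite -scalerAl -scalerAr scalerA exprD. Qed.

Lemma term_mul x y i j k i' j' k' :
  term x i j k * term y i' j' k' = term (x * y) (i + i') (j + j') (k + k').
Proof. by rewrite /term !scaleX_mul. Qed.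

Lemma term1 : term 1 0 0 0 = 1.
Proof. by rewrite /term !expr0 !scale1r. Qed.

Lemma term0 i j k : term 0 i j k = 0.
Proof. by rewrite /term !scale0r. Qed.

Lemma expand1 {R : nzSemiRingType} (p : {poly R}) : p = \sum_(i < size p) p`_i *: 'X^i.
Proof. by rewrite -{1}[p]coefK poly_def. Qed.

Lemma expand3 (f : poly3 K) :
  f = \sum_(k < size f) \sum_(j < size f`_k) \sum_(i < size (f`_k)`_j)
        term (coef3 f i j k) i j k.
Proof.
rewrite {1}(expand1 f); apply: eq_bigr => k _.
rewrite {1}(expand1 f`_k) scaler_suml; apply: eq_bigr => j _.
by rewrite {1}(expand1 (f`_k)`_j) !scaler_suml.
Qed.


Definition Pm (a b c m i j k : nat) := [&& (a %| i)%N, (b %| j)%N, (c %| k)%N & (m <= i+j+k)%N].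

Lemma inSgeP a b c m (f : poly3 K) :
  inSge a b c m f <-> forall i j k, coef3 f i j k != 0 -> Pm a b c m i j k.
Proof.
split.
- move=> [H1 H2] i j k h; rewrite /Pm. by have /and3P [-> -> ->] := H1 i j k h; rewrite H2.
- move=> H; split => i j k h; have /and4P [h1 h2 h3 h4] := H i j k h => //.
  by rewrite h1 h2 h3.
Qed.

Lemma sum_nz (V : nmodType) (I : Type) (r : seq I) (P : pred I) (F : I -> V) :
  \sum_(i <- r | P i) F i != 0 -> exists i, F i != 0.
Proof.
elim: r => [|x r IH]; first by rewrite big_nil eqxx.
rewrite big_cons. case: (P x) => //.
case: (F x =P 0) => [->|/eqP h]; first by rewrite add0r.
by move=> _; exists x.
Qed.

Lemma inSge_0 a b c m : inSge a b c m (0 : poly3 K).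
Proof. by apply/inSgeP => i j k; rewrite /coef3 !coef0 eqxx. Qed.

Lemma inSge_add a b c m (f g : poly3 K) :
  inSge a b c m f -> inSge a b c m g -> inSge a b c m (f + g).
Proof.
move=> /inSgeP Hf /inSgeP Hg; apply/inSgeP => i j k.
rewrite /coef3 !coefD.
case: (((f`_k)`_j)`_i =P 0) => [e|/eqP h]; last by move=> _; apply: Hf.
by rewrite e add0r => h; apply: Hg.
Qed.

Lemma inSge_1 a b c : inSge a b c 0 (1 : poly3 K).
Proof.
apply/inSgeP => i j k. rewrite /coef3 coef1.
case: (k =P 0%N) => [->|_]; last by rewrite !coef0 eqxx.
rewrite coef1; case: (j =P 0%N) => [->|_]; last by rewrite coef0 eqxx.
rewrite coef1; case: (i =P 0%N) => [->|_]; last by rewrite eqxx.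
by rewrite /Pm !dvdn0.
Qed.

Lemma inSge_mul a b c m1 m2 (f g : poly3 K) :
  inSge a b c m1 f -> inSge a b c m2 g -> inSge a b c (m1 + m2) (f * g).
Proof.
move=> /inSgeP Hf /inSgeP Hg; apply/inSgeP => i j k.
rewrite /coef3 coefM !coef_sum => /sum_nz [[k1 hk1]] /=.
rewrite coefM coef_sum => /sum_nz [[j1 hj1]] /=.
rewrite coefM => /sum_nz [[i1 hi1]] /=.
rewrite mulf_eq0 negb_or => /andP [nf ng].
have /and4P [f1 f2 f3 f4] := Hf i1 j1 k1 nf.
have /and4P [g1 g2 g3 g4] := Hg _ _ _ ng.
move: hk1 hj1 hi1; rewrite !ltnS => hk1 hj1 hi1.
apply/and4P; split.
- by rewrite -(subnKC hi1) dvdn_add.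
- by rewrite -(subnKC hj1) dvdn_add.
- by rewrite -(subnKC hk1) dvdn_add.
- move: f4 g4 hk1 hj1 hi1 => /ssrnat.leP f4 /ssrnat.leP g4 /ssrnat.leP hk1 /ssrnat.leP hj1 /ssrnat.leP hi1.
  apply/ssrnat.leP. rewrite -!plusE -!minusE in f4 g4 *. lia.
Qed.

Lemma inSge_prod a b c m (p : seq (poly3 K)) :
  (forall g, g \in p -> inSge a b c m g) -> inSge a b c (size p * m) (\prod_(g <- p) g).
Proof.
elim: p => [|g p IH] H; first by rewrite big_nil mul0n; apply: inSge_1.
rewrite big_cons mulSn; apply: inSge_mul; first by apply: H; rewrite mem_head.
by apply: IH => q hq; apply: H; rewrite in_cons hq orbT.
Qed.

Lemma inSge_term a b c m x i j k :
  Pm a b c m i j k -> inSge a b c m (term x i j k).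
Proof.
move=> hP; apply/inSgeP => i' j' k'; rewrite coef3_term.
by case: and3P => [[/eqP -> /eqP -> /eqP ->]|]; last rewrite eqxx.
Qed.

Lemma idealpow_0 (I : poly3 K -> Prop) t : idealpow I t 0.
Proof. by exists [::]; split => //; rewrite big_nil. Qed.

Lemma idealpow_add (I : poly3 K -> Prop) t f g :
  idealpow I t f -> idealpow I t g -> idealpow I t (f + g).
Proof.
move=> [ps [H1 ->]] [qs [H2 ->]]; exists (ps ++ qs); split; last by rewrite big_cat.
by move=> p; rewrite mem_cat => /orP [] h; [apply: H1|apply: H2].
Qed.

Lemma idealpow_sum (I : poly3 K -> Prop) t (J : Type) (r : seq J) (F : J -> poly3 K) :
  (forall j, idealpow I t (F j)) -> idealpow I t (\sum_(j <- r) F j).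
Proof.
move=> H; apply: (big_ind (idealpow I t)); [exact: idealpow_0 | exact: idealpow_add | by []].
Qed.

Lemma prod_terms a b c (s : seq (nat*nat*nat)) :
  \prod_(e <- s) term 1 (a*e.1.1) (b*e.1.2) (c*e.2) =
  term 1 (a * sumn (map (fun e => e.1.1) s)) (b * sumn (map (fun e => e.1.2) s))
         (c * sumn (map (fun e => e.2) s)).
Proof.
elim: s => [|e s IH]; first by rewrite big_nil /= !muln0 term1.
by rewrite big_cons IH term_mul mulr1 /= !mulnDr.
Qed.

End P.

Lemma term_ideal (K : fieldType) (a b c : nat)
  (ha : (0 < a)%N) (hb : (0 < b)%N) (hc : (0 < c)%N) t (ht : (1 <= t)%N)
  (f : poly3 K) (Hf : inSge a b c (t * (a * b * c)) f) (i j k : nat) :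
  idealpow (inSge a b c (a * b * c)) t (term (coef3 f i j k) i j k).
Proof.
set x := coef3 f i j k.
case: (x =P 0) => [->|/eqP nx]; first by rewrite term0; apply: idealpow_0.
have /inSgeP H := Hf. have /and4P [da db dc hd] := H i j k nx.
have ei := divnK da; have ej := divnK db; have ek := divnK dc.
set u := (i %/ a)%N in ei; set v := (j %/ b)%N in ej; set w := (k %/ c)%N in ek.
have hD : (t*(a*b*c) <= a*u + b*v + c*w)%N by rewrite (mulnC a u) (mulnC b v) (mulnC c w) ei ej ek.
have [[|e0 s] [hs hall hu hv hw]] := decomp a b c ha hb hc t ht u v w hD.
  by rewrite -hs in ht.
exists [:: term x (a*e0.1.1) (b*e0.1.2) (c*e0.2) :: [seq term 1 (a*e.1.1) (b*e.1.2) (c*e.2) | e <- s]].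
split.
- move=> p; rewrite mem_seq1 => /eqP ->; split; first by rewrite /= size_map -hs.
  move=> g; rewrite in_cons => /orP [/eqP ->|/mapP [e he ->]]; apply: inSge_term;
    rewrite /Pm (dvdn_mulr _ (dvdnn a)) (dvdn_mulr _ (dvdnn b)) (dvdn_mulr _ (dvdnn c)) /=.
  + by move/andP: hall => [].
  + by apply: (allP hall); rewrite in_cons he orbT.
- rewrite big_seq1 big_cons big_map prod_terms term_mul mulr1 -!mulnDr.
  move: hu hv hw => /= -> -> ->.
  by rewrite (mulnC a) ei (mulnC b) ej (mulnC c) ek.
Qed.

Theorem mainTheorem17 (K : fieldType) (a b c : nat)
  (ha : (0 < a)%N) (hb : (0 < b)%N) (hc : (0 < c)%N)
  (hab : coprime a b) (hbc : coprime b c) (hac : coprime a c) :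
  forall t : nat, (1 <= t)%N ->
    forall f : poly3 K,
      idealpow (inSge a b c (a * b * c)) t f <-> inSge a b c (t * (a * b * c)) f.
Proof.
move=> t ht f; split.
- move=> [ps [Hps ->]].
  elim: ps Hps => [|p ps IH] Hps; first by rewrite big_nil; apply: inSge_0.
  rewrite big_cons; apply: inSge_add; last first.
    by apply: IH => q hq; apply: Hps; rewrite in_cons hq orbT.
  have [hs hg] := Hps p (mem_head _ _). rewrite -hs. exact: inSge_prod.
- move=> Hf. rewrite (expand3 f).
  do 3 (apply: idealpow_sum => ?).
  exact: term_ideal.
Qed.
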